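(* Consider the setting described in the context (linear problem, Gauss–Radau collocation nodes, $L$ time steps, arbitrary lower-triangular preconditioner $\mathbf{Q}_\Delta$). Then the smoother of PFASST converges if the CFL number $\mu$ is small enough. More precisely, there exist a fixed value $\mu^*_{S,0}>0$ and a constant $c>0$ independent of $\mu$ such that for all $0<\mu<\mu^*_{S,0}$, $$\rho\big(\mathbf{T}_S(\mu)\big)\le c\,\mu^{1/L},$$ where $\mathbf{T}_S(\mu)=\mathbf{I}_{LMN}-\hat{\mathbf{P}}^{-1}\mathbf{C}$ and $\rho$ denotes the spectral radius.
   Context: Fix positive integers $L$ (number of time steps), $M$ (number of collocation nodes) and $N$ (number of spatial degrees of freedom). Let $0<\tau_1<\dots<\tau_M=1$ be the (right) Gauss–Radau nodes on $[0,1]$, $\ell_j$ the associated Lagrange basis polynomials, and $\mathbf{Q}=(q_{m,j})\in\mathbb{R}^{M\times M}$ with $q_{m,j}=\int_0^{\tau_m}\ell_j(s)\,ds$ (collocation matrix). Let $\mathbf{Q}_\Delta\in\mathbb{R}^{M\times M}$ be the lower-triangular weight matrix of a simpler quadrature rule (the SDC preconditioner). Let $\mathbf{A}\in\mathbb{C}^{N\times N}$ (spatial matrix) and $\mu>0$ (CFL number). Let $\mathbf{N}_M\in\mathbb{R}^{M\times M}$ have all entries of its last column equal to $1$ and all other entries $0$, let $\mathbf{H}=\mathbf{N}_M\otimes\mathbf{I}_N$, and let $\mathbf{E}\in\mathbb{R}^{L\times L}$ have ones on the first subdiagonal and zeros elsewhere. The composite collocation matrix is $\mathbf{C}=\mathbf{I}_{LMN}-\mu\,\mathbf{I}_L\otimes\mathbf{Q}\otimes\mathbf{A}-\mathbf{E}\otimes\mathbf{H}$.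 The fine-level approximative block Jacobi preconditioner is $\hat{\mathbf{P}}=\mathbf{I}_{LMN}-\mu\,\mathbf{I}_L\otimes\mathbf{Q}_\Delta\otimes\mathbf{A}$, assumed invertible, and the smoother's iteration matrix is $\mathbf{T}_S(\mu)=\mathbf{I}_{LMN}-\hat{\mathbf{P}}^{-1}\mathbf{C}$. *)

(* Defs.v *)
From HB Require Import structures.
From mathcomp Require Import all_boot all_order all_algebra.
From mathcomp Require Import classical_sets reals exp.
From mathcomp Require Import complex mxtens.
Set Implicit Arguments. Unset Strict Implicit. Unset Printing Implicit Defensive.
Import Order.TTheory GRing.Theory Num.Theory.
Local Open Scope ring_scope.
Local Open Scope classical_set_scope.

Section Defs.
Variable R : realType.

Definition pint (p : {poly R}) (x : R) : R :=
  \sum_(i < size p) p`_i * x ^+ i.+1 / (i.+1)%:R.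

Definition lagr (M : nat) (tau : 'I_M -> R) (j : 'I_M) : {poly R} :=
  \prod_(k < M | k != j) (('X - (tau k)%:P) * ((tau j - tau k)^-1)%:P).

Definition is_right_radau (M : nat) (tau : 'I_M -> R) : Prop :=
  [/\ (forall i j : 'I_M, (i < j)%N -> tau i < tau j),
      (forall i, 0 < tau i),
      (forall i : 'I_M, i.+1 = M -> tau i = 1) &
      (forall p : {poly R}, (size p <= (2 * M).-1)%N ->
         pint p 1 = \sum_(j < M) pint (lagr tau j) 1 * p.[tau j])].

Definition collQ (M : nat) (tau : 'I_M -> R) : 'M[R]_M :=
  \matrix_(m, j) pint (lagr tau j) (tau m).

Definition lower_tri (M : nat) (A : 'M[R]_M) : Prop :=
  forall i j : 'I_M, (i < j)%N -> A i j = 0.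

Definition toC (x : R) : R[i] := (x%:C)%C.

Definition NM (M : nat) : 'M[R[i]]_M := \matrix_(i, j) ((j.+1 == M)%:R).
Definition Esub (L : nat) : 'M[R[i]]_L := \matrix_(i, j) ((i == j.+1 :> nat)%:R).

(* Kronecker products are taken right-associated: X (x) (Y (x) Z) *)
Definition Hmat (M N : nat) : 'M[R[i]]_(M * N) := NM M *t (1%:M : 'M_N).

Definition collC (L M N : nat) (tau : 'I_M -> R) (A : 'M[R[i]]_N) (mu : R)
  : 'M[R[i]]_(L * (M * N)) :=
  1%:M - toC mu *: ((1%:M : 'M_L) *t (map_mx toC (collQ tau) *t A))
       - Esub L *t Hmat M N.

Definition Phat (L M N : nat) (QD : 'M[R]_M) (A : 'M[R[i]]_N) (mu : R)
  : 'M[R[i]]_(L * (M * N)) :=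
  1%:M - toC mu *: ((1%:M : 'M_L) *t (map_mx toC QD *t A)).

Definition TS (L M N : nat) (tau : 'I_M -> R) (QD : 'M[R]_M)
  (A : 'M[R[i]]_N) (mu : R) : 'M[R[i]]_(L * (M * N)) :=
  1%:M - invmx (Phat L QD A mu) *m collC L tau A mu.

Definition spectral_radius (n : nat) (T : 'M[R[i]]_n) : R :=
  sup [set ComplexField.Normc.normc l | l in [set l | eigenvalue T l]].

End Defs.

(* Main.v *)
Require Import Defs.
From HB Require Import structures.
From mathcomp Require Import all_boot all_order all_algebra.
From mathcomp Require Import classical_sets reals exp.
From mathcomp Require Import complex mxtens.
From mathcomp Require Import lra.
Import Order.TTheory GRing.Theory Num.Theory.
Local Open Scope ring_scope.

Set Implicit Arguments.
Section Aux.
Variable R : realType.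
Local Notation C := R[i].
Definition nrm (x : C) : R := ComplexField.Normc.normc x.

Lemma nrm_ge0 x : 0 <= nrm x.
Proof. by case: x => a b; rewrite /nrm /= sqrtr_ge0. Qed.
Lemma nrmM x y : nrm (x * y) = nrm x * nrm y.
Proof. exact: ComplexField.Normc.normcM. Qed.
Lemma nrmD x y : nrm (x + y) <= nrm x + nrm y.
Proof. exact: le_normcD. Qed.
Lemma nrmN x : nrm (- x) = nrm x.
Proof. exact: normcN. Qed.
Lemma nrm0 : nrm 0 = 0.
Proof. exact: ComplexField.Normc.normc0. Qed.
Lemma nrm_eq0 x : nrm x = 0 -> x = 0.
Proof. exact: ComplexField.Normc.eq0_normc. Qed.
Lemma nrm_toC (a : R) : 0 <= a -> nrm (toC a) = a.
Proof. by move=> a0; rewrite /nrm /toC /= expr0n /= addr0 sqrtr_sqr ger0_norm. Qed.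
Lemma nrmX x k : nrm (x ^+ k) = nrm x ^+ k.
Proof.
elim: k => [|k IH]; first by rewrite !expr0 /nrm ComplexField.Normc.normc1.
by rewrite !exprS nrmM IH.
Qed.
Lemma nrm_sum (I : Type) (r : seq I) (P : pred I) (F : I -> C) :
  nrm (\sum_(i <- r | P i) F i) <= \sum_(i <- r | P i) nrm (F i).
Proof.
elim/big_rec2: _ => [|i y1 y2 _ H]; first by rewrite nrm0.
by apply: le_trans (nrmD _ _) _; rewrite lerD2l.
Qed.

Definition mn {m n} (B : 'M[C]_(m, n)) : R := \sum_i \sum_j nrm (B i j).

Lemma mn_ge0 {m n} (B : 'M[C]_(m, n)) : 0 <= mn B.
Proof. by apply: sumr_ge0 => i _; apply: sumr_ge0 => j _; apply: nrm_ge0. Qed.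

Lemma mnD {m n} (A B : 'M[C]_(m, n)) : mn (A + B) <= mn A + mn B.
Proof.
rewrite /mn -big_split /=; apply: ler_sum => i _.
rewrite -big_split /=; apply: ler_sum => j _; rewrite mxE; exact: nrmD.
Qed.

Lemma mnN {m n} (A : 'M[C]_(m, n)) : mn (- A) = mn A.
Proof. by apply: eq_bigr => i _; apply: eq_bigr => j _; rewrite mxE nrmN. Qed.

Lemma mnB {m n} (A B : 'M[C]_(m, n)) : mn (A - B) <= mn A + mn B.
Proof. by rewrite -[mn B]mnN; apply: mnD. Qed.

Lemma mnZ {m n} a (A : 'M[C]_(m, n)) : mn (a *: A) = nrm a * mn A.
Proof.
rewrite /mn mulr_sumr; apply: eq_bigr => i _; rewrite mulr_sumr.
by apply: eq_bigr => j _; rewrite mxE nrmM.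
Qed.

Lemma mn0 {m n} : mn (0 : 'M[C]_(m, n)) = 0.
Proof. by rewrite /mn big1 // => i _; rewrite big1 // => j _; rewrite mxE nrm0. Qed.

Lemma mnM {m n p} (A : 'M[C]_(m, n)) (B : 'M[C]_(n, p)) : mn (A *m B) <= mn A * mn B.
Proof.
rewrite /mn mulr_suml; apply: ler_sum => i _.
apply: (@le_trans _ _ (\sum_k \sum_j nrm (A i j) * nrm (B j k))).
  apply: ler_sum => k _; rewrite mxE; apply: le_trans (nrm_sum _ _ _) _.
  by apply: ler_sum => j _; rewrite nrmM.
rewrite exchange_big /= mulr_suml; apply: ler_sum => j _.
rewrite -mulr_sumr; apply: ler_wpM2l; first exact: nrm_ge0.
rewrite (bigD1 j) //= lerDl; apply: sumr_ge0 => k _; apply: sumr_ge0 => l _.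
exact: nrm_ge0.
Qed.

Lemma mn_eq0 {m n} (A : 'M[C]_(m, n)) : mn A = 0 -> A = 0.
Proof.
move=> /eqP; rewrite psumr_eq0; last by move=> i _; apply: sumr_ge0 => j _; apply: nrm_ge0.
move=> /allP H; apply/matrixP => i j; rewrite mxE.
have := H i (mem_index_enum _); rewrite /= psumr_eq0; last by move=> k _; apply: nrm_ge0.
by move=> /allP /(_ j (mem_index_enum _)) /= /eqP /nrm_eq0.
Qed.


Definition mpow {n} (X : 'M[C]_n) k := iter k (fun Y => Y *m X) 1%:M.

Lemma mpow_bound n (X : 'M[C]_n) a k : mn X <= a ->
  mn (mpow X k) <= mn (1%:M : 'M[C]_n) * a ^+ k.
Proof.
move=> Ha; elim: k => [|k IH]; first by rewrite expr0 mulr1.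
rewrite /mpow iterS -/(mpow X k).
apply: le_trans (mnM _ _) _; rewrite exprS mulrCA mulrC.
apply: ler_pM => //; [exact: mn_ge0 | exact: mn_ge0].
Qed.

Lemma perturb n (a b : R) k : 0 <= a -> 0 <= b -> exists c : R, 0 <= c /\
  forall (X Y : 'M[C]_n) (e : C), mn X <= a -> mn Y <= b -> nrm e <= 1 ->
  mn (mpow (X + e *: Y) k - mpow X k) <= nrm e * c.
Proof.
move=> a0 b0; elim: k => [|k [c [c0 IH]]].
  exists 0; split => // X Y e _ _ _; by rewrite /mpow /= subrr mn0 mulr0.
exists (c * (a + b) + mn (1%:M : 'M[C]_n) * a ^+ k * b); split.
  apply: addr_ge0; first by apply: mulr_ge0 => //; apply: addr_ge0.
  by apply: mulr_ge0 => //; apply: mulr_ge0; [exact: mn_ge0| exact: exprn_ge0].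
move=> X Y e HX HY He.
have -> : mpow (X + e *: Y) k.+1 - mpow X k.+1 =
  (mpow (X + e *: Y) k - mpow X k) *m (X + e *: Y) + mpow X k *m (e *: Y).
  rewrite /mpow !iterS -!/(mpow _ k) mulmxBl mulmxDr.
  by rewrite mulmxDr opprD !addrA subrK.
apply: le_trans (mnD _ _) _.
have e0 := nrm_ge0 e.
have HXY : mn (X + e *: Y) <= a + b.
  apply: le_trans (mnD _ _) _; rewrite mnZ; apply: lerD => //.
  have := mn_ge0 Y; nra.
rewrite mulrDr; apply: lerD.
  apply: le_trans (mnM _ _) _; rewrite mulrA; apply: ler_pM => //; try exact: mn_ge0.
  exact: IH.
apply: le_trans (mnM _ _) _; rewrite mnZ.
have := @mpow_bound n X a k HX; have := mn_ge0 (mpow X k); have := mn_ge0 Y.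
set u := mn (mpow X k); set w := mn (1%:M : 'M[C]_n) * a ^+ k.
have : 0 <= w by apply: mulr_ge0; [exact: mn_ge0| exact: exprn_ge0].
move=> w0 Y0 u0 uw; rewrite mulrCA -(mulrA _ _ b); apply: ler_wpM2l => //; rewrite mulrA; exact: ler_pM.
Qed.

Lemma eig_pow n (T : 'M[C]_n) (v : 'rV[C]_n) l k : v *m T = l *: v ->
  v *m mpow T k = l ^+ k *: v.
Proof.
move=> Hv; elim: k => [|k IH]; first by rewrite /mpow /= mulmx1 expr0 scale1r.
by rewrite /mpow iterS mulmxA -/(mpow T k) IH -scalemxAl Hv scalerA exprSr.
Qed.


Lemma mpow_tens m n (A : 'M[C]_m) (B : 'M[C]_n) k :
  mpow (A *t B) k.+1 = mpow A k.+1 *t mpow B k.+1.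
Proof.
elim: k => [|k IH]; first by rewrite /mpow /= !mul1mx.
by rewrite /mpow iterS -/(mpow _ k.+1) IH tensmx_mul.
Qed.

Lemma Esub_pow L k (i j : 'I_L) : (i < j + k)%N -> mpow (Esub R L) k i j = 0.
Proof.
elim: k i j => [|k IH] i j.
  rewrite addn0 /mpow /= mxE => hij; case: eqP => // hh.
  by move: hij; rewrite hh ltnn.
move=> hij; rewrite /mpow iterS -/(mpow _ k) mxE big1 // => l _.
rewrite [Esub R L l j]mxE; case: eqP => [hl|_]; last by rewrite mulr0.
by rewrite IH ?mul0r // hl addSn -addnS.
Qed.

Lemma Esub_nil L : mpow (Esub R L) L = 0.
Proof.
apply/matrixP => i j; rewrite mxE Esub_pow //.
by apply: leq_trans (ltn_ord i) _; rewrite leq_addl.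
Qed.

End Aux.
Arguments mn {R m n} B.
Arguments nrm {R} x.
Arguments mpow {R n} X k.
Arguments mn_ge0 {R m n} B.
Arguments mnD {R m n} A B.
Arguments mnZ {R m n} a A.
Arguments mnM {R m n p} A B.
Arguments mn_eq0 {R m n} A.

Lemma aux1 {R : realType} (x I m k : R) : 0 <= x -> 0 <= m -> 0 <= k -> m * k <= 1 / 2 ->
  x <= I + m * (x * k) -> x <= 2 * I.
Proof. move=> *; nra. Qed.
Lemma aux2 {R : realType} (m q : R) : 0 <= m -> m <= 1 -> 0 <= q -> m * q <= q.
Proof. move=> *; nra. Qed.
Lemma aux3 {R : realType} (m k : R) : 0 < m -> 0 <= k -> m < 1 / (2 * (k + 1)) -> m * k <= 1 / 2 /\ m <= 1.
Proof.
move=> m0 k0; rewrite ltr_pdivlMr; last by apply: mulr_gt0 => //; apply: ltr_wpDl.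
move=> H; split; nra.
Qed.

Lemma alg1 {R : realType} n (X Y Z : 'M[R[i]]_n) s :
  1%:M - s *: Y - Z = (1%:M - s *: X) - (s *: (Y - X) + Z).
Proof. by rewrite scalerBr opprD opprB !addrA subrK. Qed.

Lemma alg2 {R : realType} n (P X D G Y : 'M[R[i]]_n) s : P \in unitmx ->
  invmx P = 1%:M + s *: (invmx P *m X) -> D = s *: Y + G ->
  1%:M - invmx P *m (P - D) = G + s *: (Y + invmx P *m X *m D).
Proof.
move=> Pu Hinv HD.
rewrite mulmxBr mulVmx // opprB addrC subrK.
rewrite {1}Hinv mulmxDl mul1mx -scalemxAl {1}HD scalerDr.
by rewrite [s *: Y + G]addrC -addrA.
Qed.

Lemma G_nil {R : realType} L m (B : 'M[R[i]]_m) : (0 < L)%N -> mpow (Esub R L *t B) L = 0.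
Proof. by case: L => // L' _; rewrite mpow_tens Esub_nil tens0mx. Qed.

From mathcomp Require Import boolp.

Theorem lemma1 (R : realType) (L M N : nat) (tau : 'I_M -> R)
  (QD : 'M[R]_M) (A : 'M[R[i]]_N) :
  (0 < L)%N -> (0 < M)%N -> (0 < N)%N ->
  is_right_radau tau -> lower_tri QD ->
  exists mustar : R, exists c : R, 0 < mustar /\ 0 < c /\
    forall mu : R, 0 < mu -> mu < mustar ->
      Phat L QD A mu \in unitmx ->
      spectral_radius (TS L tau QD A mu) <= c * mu `^ (L%:R)^-1.
Proof.
move=> L0 M0 N0 _ _.
pose K1 : 'M[R[i]]_(L * (M * N)) := (1%:M : 'M_L) *t (map_mx (@toC R) QD *t A).
pose Kq : 'M[R[i]]_(L * (M * N)) :=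
  (1%:M : 'M_L) *t (map_mx (@toC R) (collQ tau) *t A).
pose G : 'M[R[i]]_(L * (M * N)) := Esub R L *t Hmat R M N.
pose I1 := mn (1%:M : 'M[R[i]]_(L * (M * N))).
pose k1 := mn K1.
pose a := mn G.
pose b := mn (Kq - K1) + 2 * I1 * k1 * (mn (Kq - K1) + a).
have I10 : 0 <= I1 by exact: mn_ge0.
have k10 : 0 <= k1 by exact: mn_ge0.
have a0 : 0 <= a by exact: mn_ge0.
have q0 : 0 <= mn (Kq - K1) by exact: mn_ge0.
have b0 : 0 <= b by rewrite /b; apply: addr_ge0 => //;
  apply: mulr_ge0; [apply: mulr_ge0 => //; apply: mulr_ge0 | apply: addr_ge0].
have [c [c0 Hc]] := @perturb R (L * (M * N)) a b L a0 b0.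
exists (1 / (2 * (k1 + 1))), ((c + 1) `^ (L%:R)^-1).
split; first by apply: divr_gt0 => //; apply: mulr_gt0 => //; apply: ltr_wpDl.
split; first by apply: powR_gt0; apply: ltr_wpDl.
move=> mu mu0 mumax Pu.
have [muk mu1] := @aux3 R mu k1 mu0 k10 mumax.
set P := Phat L QD A mu.
have HP : P = 1%:M - toC mu *: K1 by [].
have Hinv : invmx P = 1%:M + toC mu *: (invmx P *m K1).
  have := mulVmx Pu; rewrite -/P {2}HP mulmxBr mulmx1 -scalemxAr => H.
  by rewrite -H subrK.
have Hnmu : nrm (toC mu) = mu by apply: nrm_toC; apply: ltW.
have HPb : mn (invmx P) <= 2 * I1.
  have H1 : mn (invmx P) <= I1 + mu * (mn (invmx P) * k1).
    rewrite {1}Hinv; apply: le_trans (mnD _ _) _; rewrite mnZ Hnmu lerD2l.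
    by apply: ler_wpM2l; [exact: ltW | exact: mnM].
  exact: (@aux1 R _ I1 mu k1 (mn_ge0 (invmx P)) (ltW mu0) k10 muk H1).
set D := toC mu *: (Kq - K1) + G.
set W := (Kq - K1) + invmx P *m K1 *m D.
have HC : collC L tau A mu = P - D by exact: (alg1 K1 Kq G (toC mu)).
have HT : TS L tau QD A mu = G + toC mu *: W.
  rewrite /TS -/P HC /W; exact: (@alg2 R _ P K1 D G (Kq - K1) (toC mu) Pu Hinv (erefl _)).
have HD : mn D <= mn (Kq - K1) + a.
  apply: le_trans (mnD _ _) _; rewrite mnZ Hnmu lerD2r; exact: (@aux2 R mu _ (ltW mu0) mu1 q0).
have HW : mn W <= b.
  apply: le_trans (mnD _ _) _; rewrite lerD2l.
  apply: le_trans (mnM _ _) _; apply: ler_pM; try exact: mn_ge0.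
    apply: le_trans (mnM _ _) _; apply: ler_pM => //; exact: mn_ge0.
  done.
have HTL : mn (mpow (TS L tau QD A mu) L) <= mu * c.
  have := Hc G W (toC mu) (lexx _) HW; rewrite Hnmu => /(_ mu1).
  have -> : mpow G L = 0.
    exact: G_nil.
  by rewrite subr0 HT.
have c10 : 0 <= c + 1 by apply: addr_ge0.
rewrite /spectral_radius.
pose S := ([set ComplexField.Normc.normc l | l in [set l | eigenvalue (TS L tau QD A mu) l]])%classic.
change (sup S <= (c + 1) `^ (L%:R)^-1 * mu `^ (L%:R)^-1).
have HS : forall x, S x -> x <= (c + 1) `^ (L%:R)^-1 * mu `^ (L%:R)^-1.
  move=> x [l /= /eigenvalueP [v Hv vn0] <-].
  have Hp := eig_pow L Hv.
  have vpos : 0 < mn v.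
    rewrite lt_def mn_ge0 andbT; apply/eqP => /mn_eq0 hv; by rewrite hv eqxx in vn0.
  have HlL : nrm l ^+ L <= mu * (c + 1).
    have H1 : nrm l ^+ L * mn v <= mn v * (mu * c).
      rewrite -nrmX -mnZ -Hp; apply: le_trans (mnM _ _) _.
      by apply: ler_wpM2l; [exact: mn_ge0 | exact: HTL].
    have H2 : nrm l ^+ L <= mu * c.
      by rewrite -(ler_pM2r vpos) [X in _ <= X]mulrC.
    apply: le_trans H2 _; apply: ler_wpM2l; [exact: ltW | by rewrite lerDl ler01].
  have Lpos : (L%:R : R) != 0 by rewrite pnatr_eq0 -lt0n.
  change (nrm l <= (c + 1) `^ (L%:R)^-1 * mu `^ (L%:R)^-1).
  have -> : nrm l = (nrm l ^+ L) `^ (L%:R)^-1.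
    by rewrite -powR_mulrn ?nrm_ge0 // -powRrM mulfV // powRr1 // nrm_ge0.
  rewrite mulrC -powRM ?c10 ?(ltW mu0) //.
    apply: ge0_ler_powR => //; first by rewrite invr_ge0 ler0n.
      by rewrite nnegrE; apply: exprn_ge0; apply: nrm_ge0.
    by rewrite nnegrE; apply: mulr_ge0 => //; exact: ltW.
have [S0|S0] := pselect (S !=set0)%classic.
  by apply: ge_sup => // x /HS.
have -> : S = set0%classic.
  by apply/seteqP; split => x // Sx; apply: S0; exists x.
rewrite sup0; apply: mulr_ge0; exact: powR_ge0.
Qed.
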